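(* Let $n\ge2$. The group $VSG_n$ has a presentation with generators $\{\mu_{i,i+1},\gamma_{i,i+1},v_i\mid 1\le i\le n-1\}$ (where $\mu_{i,i+1}=\sigma_iv_i$ and $\gamma_{i,i+1}=\tau_iv_i$) and defining relations: $v_i^2=1$; $v_iv_jv_i=v_jv_iv_j$ for $|i-j|=1$; $v_i\mu_{j,j+1}v_i=v_j\mu_{i,i+1}v_j$ for $|i-j|=1$; $v_i\gamma_{j,j+1}v_i=v_j\gamma_{i,i+1}v_j$ for $|i-j|=1$; $\mu_{j,j+1}(v_j\mu_{i,i+1}v_j)\mu_{i,i+1}=\mu_{i,i+1}(v_j\mu_{i,i+1}v_j)\mu_{j,j+1}$ for $|i-j|=1$; $\mu_{j,j+1}(v_j\mu_{i,i+1}v_j)\gamma_{i,i+1}=\gamma_{i,i+1}(v_j\mu_{i,i+1}v_j)\mu_{j,j+1}$ for $|i-j|=1$; $\mu_{i,i+1}v_i\gamma_{i,i+1}=\gamma_{i,i+1}v_i\mu_{i,i+1}$ for all $i$; $\alpha_i\beta_j=\beta_j\alpha_i$ for $|i-j|>1$, where $\alpha_i,\beta_i\in\{\mu_{i,i+1},\gamma_{i,i+1},v_i\}$.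
   Context: Let $n\ge 2$. The virtual singular braid group $VSG_n$ is the group generated by $\sigma_i,v_i,\tau_i$ ($1\le i\le n-1$) subject to: $v_i^2=1$; $\sigma_i\tau_i=\tau_i\sigma_i$; for $|i-j|=1$: $\sigma_i\sigma_j\sigma_i=\sigma_j\sigma_i\sigma_j$, $v_iv_jv_i=v_jv_iv_j$, $v_i\sigma_jv_i=v_j\sigma_iv_j$, $v_i\tau_jv_i=v_j\tau_iv_j$, $\sigma_i\sigma_j\tau_i=\tau_j\sigma_i\sigma_j$; and for $|i-j|>1$: $g_ih_j=h_jg_i$ for all $g_i,h_i\in\{\sigma_i,\tau_i,v_i\}$. The elementary fusing strings are $\mu_{i,i+1}:=\sigma_iv_i$, $\mu_{i,i+1}^{-1}=v_i\sigma_i^{-1}$, $\gamma_{i,i+1}:=\tau_iv_i$, $\bar\gamma_{i,i+1}:=v_i\tau_i^{-1}=\gamma_{i,i+1}^{-1}$. *)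

(* Defs.v *)
(* Groups given by presentations are modelled
   as words in the generators and their formal inverses, modulo the
   congruence generated by free cancellation and the defining relations. *)
From mathcomp Require Import all_boot.
Set Implicit Arguments. Unset Strict Implicit. Unset Printing Implicit Defensive.

(* A word: a list of letters (x, b); b = false is x, b = true is x^{-1}. *)
Definition word (X : Type) := seq (X * bool).

Definition winv (X : Type) (w : word X) : word X :=
  rev (map (fun p => (p.1, ~~ p.2)) w).

Inductive weq (X : Type) (R : word X -> word X -> Prop) : word X -> word X -> Prop :=
| weq_refl : forall w, weq R w w
| weq_sym : forall u w, weq R u w -> weq R w u
| weq_trans : forall u v w, weq R u v -> weq R v w -> weq R u w
| weq_cat : forall u u' v v', weq R u u' -> weq R v v' -> weq R (u ++ v) (u' ++ v')
| weq_cancel : forall x b, weq R [:: (x, b); (x, ~~ b)] [::]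
| weq_rel : forall l r, R l r -> weq R l r.

Definition adj (i j : nat) : bool := (i.+1 == j) || (j.+1 == i).
Definition far (i j : nat) : bool := (i.+1 < j) || (j.+1 < i).

(* index i : 'I_n.-1 stands for the generator index i+1 in 1..n-1 *)
Inductive vsg_kind := kSigma | kTau | kV.
Definition vsg_letter (n : nat) := (vsg_kind * 'I_n.-1)%type.

Definition sg {n} (i : 'I_n.-1) : vsg_letter n * bool := ((kSigma, i), false).
Definition tg {n} (i : 'I_n.-1) : vsg_letter n * bool := ((kTau, i), false).
Definition vg {n} (i : 'I_n.-1) : vsg_letter n * bool := ((kV, i), false).

Inductive vsg_rel (n : nat) : word (vsg_letter n) -> word (vsg_letter n) -> Prop :=
| vsg_vv : forall i : 'I_n.-1, vsg_rel [:: vg i; vg i] [::]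
| vsg_st : forall i : 'I_n.-1, vsg_rel [:: sg i; tg i] [:: tg i; sg i]
| vsg_sss : forall i j : 'I_n.-1, adj i j ->
    vsg_rel [:: sg i; sg j; sg i] [:: sg j; sg i; sg j]
| vsg_vvv : forall i j : 'I_n.-1, adj i j ->
    vsg_rel [:: vg i; vg j; vg i] [:: vg j; vg i; vg j]
| vsg_vsv : forall i j : 'I_n.-1, adj i j ->
    vsg_rel [:: vg i; sg j; vg i] [:: vg j; sg i; vg j]
| vsg_vtv : forall i j : 'I_n.-1, adj i j ->
    vsg_rel [:: vg i; tg j; vg i] [:: vg j; tg i; vg j]
| vsg_sst : forall i j : 'I_n.-1, adj i j ->
    vsg_rel [:: sg i; sg j; tg i] [:: tg j; sg i; sg j]
| vsg_far : forall (k k' : vsg_kind) (i j : 'I_n.-1), far i j ->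
    vsg_rel [:: ((k, i), false); ((k', j), false)] [:: ((k', j), false); ((k, i), false)].

Definition VSGeq (n : nat) := weq (@vsg_rel n).

Inductive fus_kind := kMu | kGam | kW.
Definition fus_letter (n : nat) := (fus_kind * 'I_n.-1)%type.

Definition mg {n} (i : 'I_n.-1) : fus_letter n * bool := ((kMu, i), false).
Definition gg {n} (i : 'I_n.-1) : fus_letter n * bool := ((kGam, i), false).
Definition wg {n} (i : 'I_n.-1) : fus_letter n * bool := ((kW, i), false).

Inductive fus_rel (n : nat) : word (fus_letter n) -> word (fus_letter n) -> Prop :=
| fus_vv : forall i : 'I_n.-1, fus_rel [:: wg i; wg i] [::]
| fus_vvv : forall i j : 'I_n.-1, adj i j ->
    fus_rel [:: wg i; wg j; wg i] [:: wg j; wg i; wg j]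
| fus_vmv : forall i j : 'I_n.-1, adj i j ->
    fus_rel [:: wg i; mg j; wg i] [:: wg j; mg i; wg j]
| fus_vgv : forall i j : 'I_n.-1, adj i j ->
    fus_rel [:: wg i; gg j; wg i] [:: wg j; gg i; wg j]
| fus_mmm : forall i j : 'I_n.-1, adj i j ->
    fus_rel [:: mg j; wg j; mg i; wg j; mg i] [:: mg i; wg j; mg i; wg j; mg j]
| fus_mmg : forall i j : 'I_n.-1, adj i j ->
    fus_rel [:: mg j; wg j; mg i; wg j; gg i] [:: gg i; wg j; mg i; wg j; mg j]
| fus_mvg : forall i : 'I_n.-1,
    fus_rel [:: mg i; wg i; gg i] [:: gg i; wg i; mg i]
| fus_far : forall (k k' : fus_kind) (i j : 'I_n.-1), far i j ->
    fus_rel [:: ((k, i), false); ((k', j), false)] [:: ((k', j), false); ((k, i), false)].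

Definition FUSeq (n : nat) := weq (@fus_rel n).

Definition fus_image {n} (x : fus_letter n) : word (vsg_letter n) :=
  match x.1 with
  | kMu => [:: sg x.2; vg x.2]
  | kGam => [:: tg x.2; vg x.2]
  | kW => [:: vg x.2]
  end.

Definition phi {n} (w : word (fus_letter n)) : word (vsg_letter n) :=
  flatten (map (fun p => if p.2 then winv (fus_image p.1) else fus_image p.1) w).

(* Main.v *)
Require Import Defs.
From mathcomp Require Import all_boot.
From Stdlib Require List.
Set Implicit Arguments. Unset Strict Implicit. Unset Printing Implicit Defensive.

Section W.
Variables (X : Type) (R : word X -> word X -> Prop).
Local Notation "u ~~> w" := (weq R u w) (at level 70).
Implicit Types u w v l r : word X.

Lemma wtr (v u w : word X) : u ~~> v -> v ~~> w -> u ~~> w.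
Proof. exact: weq_trans. Qed.

Lemma weq_catl (a : word X) u w : u ~~> w -> a ++ u ~~> a ++ w.
Proof. move=> H; exact: weq_cat (weq_refl _ _) H. Qed.
Lemma weq_catr (a : word X) u w : u ~~> w -> u ++ a ~~> w ++ a.
Proof. move=> H; exact: weq_cat H (weq_refl _ _). Qed.

Lemma rw_at k (l r w w' : word X) : l ~~> r -> take (size l) (drop k w) = l ->
  take k w ++ r ++ drop (k + size l) w ~~> w' -> w ~~> w'.
Proof.
move=> H E H2; apply: wtr H2.
rewrite -{1}(cat_take_drop k w) -{1}(cat_take_drop (size l) (drop k w)) E.
by rewrite addnC -drop_drop; apply: weq_catl; apply: weq_catr.
Qed.

Lemma winv_cat u w : winv (u ++ w) = winv w ++ winv u.
Proof. by rewrite /winv map_cat rev_cat. Qed.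

Lemma winvK w : winv (winv w) = w.
Proof.
rewrite /winv map_rev revK -map_comp -[RHS]map_id; apply: eq_map => -[x b] /=.
by rewrite negbK.
Qed.

Lemma cat_winv w : w ++ winv w ~~> [::].
Proof.
elim: w => [|[x b] w IH] /=; first exact: weq_refl.
rewrite /winv /= rev_cons -cats1 -/(winv w).
have -> : (x, b) :: w ++ winv w ++ [:: (x, ~~ b)] =
   [:: (x,b)] ++ (w ++ winv w) ++ [:: (x, ~~ b)] by rewrite /= catA.
apply: wtr (weq_cancel _ x b).
have -> : [:: (x, b); (x, ~~ b)] = [:: (x,b)] ++ [::] ++ [:: (x, ~~ b)] by [].
by apply: weq_catl; apply: weq_catr.
Qed.

Lemma winv_cat' w : winv w ++ w ~~> [::].
Proof. by have := cat_winv (winv w); rewrite winvK. Qed.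

Lemma weq_winv u w : u ~~> w -> winv u ~~> winv w.
Proof.
elim=> {u w}.
- move=> w; exact: weq_refl.
- move=> u w _ H; exact: weq_sym.
- move=> u v w _ H1 _ H2; exact: wtr H2.
- move=> u u' v v' _ H1 _ H2; rewrite !winv_cat; exact: weq_cat.
- move=> x b; rewrite /winv /= negbK.
  by have := weq_cancel R x b.
- move=> l r H.
  apply: (wtr (v := winv l ++ (r ++ winv r))).
    rewrite -[X in X ~~> _]cats0; apply: weq_catl; apply: weq_sym; exact: cat_winv.
  apply: (wtr (v := winv l ++ (l ++ winv r))).
    apply: weq_catl; apply: weq_catr; apply: weq_sym; exact: weq_rel.
  rewrite catA -[X in _ ~~> X]cat0s; apply: weq_catr; exact: winv_cat'.
Qed.

Lemma cancel_r x u w : u ++ x ~~> w ++ x -> u ~~> w.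
Proof.
move=> H.
apply: (wtr (v := (u ++ x) ++ winv x)).
  rewrite -catA -[X in X ~~> _]cats0; apply: weq_catl; apply: weq_sym; exact: cat_winv.
apply: (wtr (v := (w ++ x) ++ winv x)); first exact: weq_catr.
rewrite -catA -[X in _ ~~> X]cats0; apply: weq_catl; exact: cat_winv.
Qed.

Lemma comm_letter a w : (forall b, List.In b w -> [:: a; b] ~~> [:: b; a]) ->
  a :: w ~~> w ++ [:: a].
Proof.
elim: w => [|b w IH] H /=; first exact: weq_refl.
apply: (wtr (v := b :: a :: w)).
  have -> : [:: a, b & w] = [:: a; b] ++ w by [].
  have -> : [:: b, a & w] = [:: b; a] ++ w by [].
  apply: weq_catr; apply: H; by left.
have -> : [:: b, a & w] = [:: b] ++ (a :: w) by [].
have -> : b :: w ++ [:: a] = [:: b] ++ (w ++ [:: a]) by [].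
apply: weq_catl; apply: IH => c Hc; apply: H; by right.
Qed.

Lemma comm_words u w : (forall a, List.In a u -> forall b, List.In b w ->
    [:: a; b] ~~> [:: b; a]) -> u ++ w ~~> w ++ u.
Proof.
elim: u => [|a u IH] H /=; first by rewrite cats0; exact: weq_refl.
apply: (wtr (v := a :: (w ++ u))).
  have -> : a :: u ++ w = [:: a] ++ (u ++ w) by [].
  have -> : a :: w ++ u = [:: a] ++ (w ++ u) by [].
  apply: weq_catl; apply: IH => c Hc; apply: H; by right.
have -> : a :: w ++ u = (a :: w) ++ u by [].
have -> : w ++ a :: u = (w ++ [:: a]) ++ u by rewrite -catA.
apply: weq_catr; apply: comm_letter => b Hb; apply: H => //; by left.
Qed.

End W.

Definition ext (X Y : Type) (f : X -> word Y) (w : word X) : word Y :=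
  flatten (map (fun p => if p.2 then winv (f p.1) else f p.1) w).

Section Ext.
Variables (X Y : Type) (f : X -> word Y).

Lemma ext_cat u w : ext f (u ++ w) = ext f u ++ ext f w.
Proof. by rewrite /ext map_cat flatten_cat. Qed.

Lemma ext_winv w : ext f (winv w) = winv (ext f w).
Proof.
elim: w => [|[x b] w IH] //=.
have E : winv ((x, b) :: w) = winv w ++ [:: (x, ~~ b)].
  by rewrite /winv /= rev_cons cats1.
have E2 : forall y c u, ext f ((y, c) :: u) =
   (if c then winv (f y) else f y) ++ ext f u by [].
rewrite E ext_cat IH !E2 winv_cat /ext /= cats0.
by clear E; case: b => //=; rewrite winvK.
Qed.

Lemma ext_hom (R : word X -> word X -> Prop) (S : word Y -> word Y -> Prop) :
  (forall l r, R l r -> weq S (ext f l) (ext f r)) ->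
  forall u w, weq R u w -> weq S (ext f u) (ext f w).
Proof.
move=> HR u w; elim=> {u w}.
- move=> w; exact: weq_refl.
- move=> u w _ H; exact: weq_sym.
- move=> u v w _ H1 _ H2; exact: wtr H2.
- move=> u u' v v' _ H1 _ H2; rewrite !ext_cat; exact: weq_cat.
- move=> x b; rewrite /ext /= cats0; case: b => /=.
    exact: winv_cat'.
  exact: cat_winv.
- exact: HR.
Qed.

End Ext.

Lemma ext_idlike (X : Type) (S : word X -> word X -> Prop) (h : X -> word X) :
  (forall x, weq S [:: (x, false)] (h x)) -> forall w, weq S w (ext h w).
Proof.
move=> Hh; elim=> [|[x b] w IH]; first exact: weq_refl.
have -> : (x, b) :: w = [:: (x, b)] ++ w by [].
rewrite ext_cat; apply: weq_cat => //.
rewrite /ext /= cats0; case: b => //=.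
have -> : [:: (x, true)] = winv [:: (x, false)] by [].
apply: weq_winv; exact: Hh.
Qed.

Lemma ext_comp (X Y Z : Type) (f : X -> word Y) (g : Y -> word Z) w :
  ext g (ext f w) = ext (fun x => ext g (f x)) w.
Proof.
elim: w => [|[x b] w IH] //=.
have -> : (x, b) :: w = [:: (x, b)] ++ w by [].
rewrite !ext_cat IH; congr (_ ++ _).
rewrite /ext /= !cats0; case: b => //=.
by rewrite -/(ext g _) ext_winv.
Qed.


Arguments rw_at {X R} k {l r w w'}.

Ltac rw k H := apply: (rw_at k H); [reflexivity | rewrite /=].

Lemma adjC i j : adj i j -> adj j i.
Proof. by rewrite /adj orbC. Qed.

Definition psi {n} (x : vsg_letter n) : word (fus_letter n) :=
  match x.1 with
  | kSigma => [:: mg x.2; wg x.2]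
  | kTau => [:: gg x.2; wg x.2]
  | kV => [:: wg x.2]
  end.

Section VS.
Variable n : nat.
Implicit Types i j : 'I_n.-1.
Local Notation "u ~~> w" := (weq (@vsg_rel n) u w) (at level 70).
Lemma S_vv i : [:: vg i; vg i] ~~> [::]. Proof. apply: weq_rel; constructor. Qed.
Lemma S_vv' i : [::] ~~> [:: vg i; vg i]. Proof. apply: weq_sym; exact: S_vv. Qed.
Lemma S_vvv i j : adj i j -> [:: vg i; vg j; vg i] ~~> [:: vg j; vg i; vg j].
Proof. move=> h; apply: weq_rel; by constructor. Qed.
Lemma S_vsv i j : adj i j -> [:: vg i; sg j; vg i] ~~> [:: vg j; sg i; vg j].
Proof. move=> h; apply: weq_rel; by constructor. Qed.
Lemma S_vtv i j : adj i j -> [:: vg i; tg j; vg i] ~~> [:: vg j; tg i; vg j].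
Proof. move=> h; apply: weq_rel; by constructor. Qed.
Lemma S_sss i j : adj i j -> [:: sg i; sg j; sg i] ~~> [:: sg j; sg i; sg j].
Proof. move=> h; apply: weq_rel; by constructor. Qed.
Lemma S_sst i j : adj i j -> [:: sg i; sg j; tg i] ~~> [:: tg j; sg i; sg j].
Proof. move=> h; apply: weq_rel; by constructor. Qed.
Lemma S_st i : [:: sg i; tg i] ~~> [:: tg i; sg i].
Proof. apply: weq_rel; by constructor. Qed.
End VS.

Section FS.
Variable n : nat.
Implicit Types i j : 'I_n.-1.
Local Notation "u ~~> w" := (weq (@fus_rel n) u w) (at level 70).
Lemma F_vv i : [:: wg i; wg i] ~~> [::]. Proof. apply: weq_rel; constructor. Qed.
Lemma F_vv' i : [::] ~~> [:: wg i; wg i]. Proof. apply: weq_sym; exact: F_vv. Qed.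
Lemma F_vvv i j : adj i j -> [:: wg i; wg j; wg i] ~~> [:: wg j; wg i; wg j].
Proof. move=> h; apply: weq_rel; by constructor. Qed.
Lemma F_vmv i j : adj i j -> [:: wg i; mg j; wg i] ~~> [:: wg j; mg i; wg j].
Proof. move=> h; apply: weq_rel; by constructor. Qed.
Lemma F_vgv i j : adj i j -> [:: wg i; gg j; wg i] ~~> [:: wg j; gg i; wg j].
Proof. move=> h; apply: weq_rel; by constructor. Qed.
Lemma F_mmm i j : adj i j ->
  [:: mg j; wg j; mg i; wg j; mg i] ~~> [:: mg i; wg j; mg i; wg j; mg j].
Proof. move=> h; apply: weq_rel; by constructor. Qed.
Lemma F_mmg i j : adj i j ->
  [:: mg j; wg j; mg i; wg j; gg i] ~~> [:: gg i; wg j; mg i; wg j; mg j].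
Proof. move=> h; apply: weq_rel; by constructor. Qed.
Lemma F_mvg i : [:: mg i; wg i; gg i] ~~> [:: gg i; wg i; mg i].
Proof. apply: weq_rel; by constructor. Qed.
End FS.

Section P1.
Variable n : nat.
Implicit Types i j : 'I_n.-1.
Local Notation "u ~~> w" := (weq (@vsg_rel n) u w) (at level 70).

Lemma P_vmv i j : adj i j ->
  [:: vg i; sg j; vg j; vg i] ~~> [:: vg j; sg i; vg i; vg j].
Proof.
move=> h. rw 2 (S_vv' i). rw 0 (S_vsv h). rw 3 (S_vvv h). rw 2 (S_vv j).
exact: weq_refl.
Qed.

Lemma P_vgv i j : adj i j ->
  [:: vg i; tg j; vg j; vg i] ~~> [:: vg j; tg i; vg i; vg j].
Proof.
move=> h. rw 2 (S_vv' i). rw 0 (S_vtv h). rw 3 (S_vvv h). rw 2 (S_vv j).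
exact: weq_refl.
Qed.

Lemma P_mmm i j : adj i j ->
  [:: sg j; vg j; vg j; sg i; vg i; vg j; sg i; vg i] ~~>
  [:: sg i; vg i; vg j; sg i; vg i; vg j; sg j; vg j].
Proof.
move=> h; have h' := adjC h.
apply: (wtr (v := [:: sg j; sg i; sg j; vg i; vg j; vg i])).
  rw 1 (S_vv j). rw 5 (S_vv' j). rw 3 (S_vsv h'). rw 2 (S_vv i).
  exact: weq_refl.
apply: weq_sym.
rw 4 (S_vv' j). rw 2 (S_vsv h'). rw 1 (S_vv i). rw 2 (S_vvv h). rw 4 (S_vv j).
rw 5 (S_vv' i). rw 3 (S_vsv h). rw 2 (S_vv j). rw 0 (S_sss h). rw 3 (S_vvv h').
exact: weq_refl.
Qed.

Lemma P_mmg i j : adj i j ->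
  [:: sg j; vg j; vg j; sg i; vg i; vg j; tg i; vg i] ~~>
  [:: tg i; vg i; vg j; sg i; vg i; vg j; sg j; vg j].
Proof.
move=> h; have h' := adjC h.
apply: (wtr (v := [:: sg j; sg i; tg j; vg i; vg j; vg i])).
  rw 1 (S_vv j). rw 5 (S_vv' j). rw 3 (S_vtv h'). rw 2 (S_vv i).
  exact: weq_refl.
apply: weq_sym.
rw 4 (S_vv' j). rw 2 (S_vsv h'). rw 1 (S_vv i). rw 2 (S_vvv h). rw 4 (S_vv j).
rw 5 (S_vv' i). rw 3 (S_vsv h). rw 2 (S_vv j). rw 0 (weq_sym (S_sst h')).
rw 3 (S_vvv h').
exact: weq_refl.
Qed.

Lemma P_mvg i :
  [:: sg i; vg i; vg i; tg i; vg i] ~~> [:: tg i; vg i; vg i; sg i; vg i].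
Proof.
rw 1 (S_vv i). rw 0 (S_st i). rw 1 (S_vv' i). exact: weq_refl.
Qed.
End P1.

Section Q1.
Variable n : nat.
Implicit Types i j : 'I_n.-1.
Local Notation "u ~~> w" := (weq (@fus_rel n) u w) (at level 70).

Lemma Q_vsv i j : adj i j ->
  [:: wg i; mg j; wg j; wg i] ~~> [:: wg j; mg i; wg i; wg j].
Proof.
move=> h. rw 2 (F_vv' i). rw 0 (F_vmv h). rw 3 (F_vvv h). rw 2 (F_vv j).
exact: weq_refl.
Qed.

Lemma Q_vtv i j : adj i j ->
  [:: wg i; gg j; wg j; wg i] ~~> [:: wg j; gg i; wg i; wg j].
Proof.
move=> h. rw 2 (F_vv' i). rw 0 (F_vgv h). rw 3 (F_vvv h). rw 2 (F_vv j).
exact: weq_refl.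
Qed.

Lemma Q_st i : [:: mg i; wg i; gg i; wg i] ~~> [:: gg i; wg i; mg i; wg i].
Proof. rw 0 (F_mvg i). exact: weq_refl. Qed.

Lemma Q_sss i j : adj i j ->
  [:: mg i; wg i; mg j; wg j; mg i; wg i] ~~> [:: mg j; wg j; mg i; wg i; mg j; wg j].
Proof.
move=> h; have h' := adjC h.
apply: (cancel_r (x := [:: wg j; wg i; wg j])) => /=.
apply: (wtr (v := [:: mg j; wg i; mg j; wg i; mg i])).
  rw 5 (F_vvv h). rw 7 (F_vv j). rw 4 (F_vv' j). rw 5 (F_vmv h'). rw 7 (F_vv i).
  rw 3 (F_vv j). rw 0 (F_mmm h'). exact: weq_refl.
apply: weq_sym.
rw 5 (F_vv j). rw 4 (F_vv' i). rw 5 (F_vmv h). rw 7 (F_vv j). rw 3 (F_vv i).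
rw 1 (F_vmv h'). exact: weq_refl.
Qed.

Lemma Q_sst i j : adj i j ->
  [:: mg i; wg i; mg j; wg j; gg i; wg i] ~~> [:: gg j; wg j; mg i; wg i; mg j; wg j].
Proof.
move=> h; have h' := adjC h.
apply: (cancel_r (x := [:: wg j; wg i; wg j])) => /=.
apply: (wtr (v := [:: gg j; wg i; mg j; wg i; mg i])).
  rw 5 (F_vvv h). rw 7 (F_vv j). rw 4 (F_vv' j). rw 5 (F_vgv h'). rw 7 (F_vv i).
  rw 3 (F_vv j). rw 0 (F_mmg h'). exact: weq_refl.
apply: weq_sym.
rw 5 (F_vv j). rw 4 (F_vv' i). rw 5 (F_vmv h). rw 7 (F_vv j). rw 3 (F_vv i).
rw 1 (F_vmv h'). exact: weq_refl.
Qed.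
End Q1.

Lemma img_form n (k : fus_kind) (i : 'I_n.-1) a :
  List.In a (fus_image (k, i)) -> exists k0, a = ((k0, i), false).
Proof.
by case: k => /= [[<-|[<-|[]]]|[<-|[<-|[]]]|[<-|[]]]; eexists.
Qed.

Lemma psi_form n (k : vsg_kind) (i : 'I_n.-1) a :
  List.In a (psi (k, i)) -> exists k0, a = ((k0, i), false).
Proof.
by case: k => /= [[<-|[<-|[]]]|[<-|[<-|[]]]|[<-|[]]]; eexists.
Qed.

Theorem mainTheorem2 (n : nat) (hn : 2 <= n) :
  (forall u w : word (fus_letter n), FUSeq u w -> VSGeq (phi u) (phi w)) /\
  (forall u w : word (fus_letter n), VSGeq (phi u) (phi w) -> FUSeq u w) /\
  (forall w : word (vsg_letter n), exists u : word (fus_letter n), VSGeq w (phi u)).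
Proof.
have Hphi : forall u w : word (fus_letter n), FUSeq u w -> VSGeq (phi u) (phi w).
  apply: (ext_hom (f := @fus_image n)) => l r; case=> /=.
  - move=> i; rewrite /ext /=; exact: S_vv.
  - move=> i j h; rewrite /ext /=; exact: S_vvv.
  - move=> i j h; rewrite /ext /=; exact: P_vmv.
  - move=> i j h; rewrite /ext /=; exact: P_vgv.
  - move=> i j h; rewrite /ext /=; exact: P_mmm.
  - move=> i j h; rewrite /ext /=; exact: P_mmg.
  - move=> i; rewrite /ext /=; exact: P_mvg.
  - move=> k k' i j h; rewrite /ext /= !cats0; apply: comm_words => a Ha b Hb.
    have [k0 ->] := img_form Ha; have [k1 ->] := img_form Hb.
    apply: weq_rel; exact: vsg_far.
have Hpsi : forall u w : word (vsg_letter n), VSGeq u w ->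
    FUSeq (ext (@psi n) u) (ext (@psi n) w).
  apply: ext_hom => l r; case=> /=.
  - move=> i; rewrite /ext /=; exact: F_vv.
  - move=> i; rewrite /ext /=; exact: Q_st.
  - move=> i j h; rewrite /ext /=; exact: Q_sss.
  - move=> i j h; rewrite /ext /=; exact: F_vvv.
  - move=> i j h; rewrite /ext /=; exact: Q_vsv.
  - move=> i j h; rewrite /ext /=; exact: Q_vtv.
  - move=> i j h; rewrite /ext /=; exact: Q_sst.
  - move=> k k' i j h; rewrite /ext /= !cats0; apply: comm_words => a Ha b Hb.
    have [k0 ->] := psi_form Ha; have [k1 ->] := psi_form Hb.
    apply: weq_rel; exact: fus_far.
split; first exact: Hphi.
split.
  move=> u w H.
  have Hid : forall x : fus_letter n,
      FUSeq [:: (x, false)] (ext (@psi n) (fus_image x)).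
    case=> [[] i]; rewrite /ext /=.
    - rw 1 (F_vv' i). exact: weq_refl.
    - rw 1 (F_vv' i). exact: weq_refl.
    - exact: weq_refl.
  have := Hpsi _ _ H; rewrite /phi -/(ext _ u) -/(ext _ w) !ext_comp => H2.
  apply: wtr (ext_idlike Hid u) _; apply: wtr H2 _.
  apply: weq_sym; exact: ext_idlike.
move=> w; exists (ext (@psi n) w).
rewrite /phi -/(ext _ (ext _ w)) ext_comp.
apply: ext_idlike; case=> [[] i]; rewrite /ext /=.
- rw 1 (S_vv' i). exact: weq_refl.
- rw 1 (S_vv' i). exact: weq_refl.
- exact: weq_refl.
Qed.
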